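(* Let $K=2$ and suppose that for every horizon $T$ (a multiple of $100$) a valid pair $(\eta,\gamma)=(\eta_T,\gamma_T)$ in the non-trivial regime is chosen. Then there exists $T_0$ such that for all $T\ge T_0$, WSU-UX run on the two-phase loss sequence satisfies $\mathbb{E}[\pi_{t,2}]\le\frac14$ for every round $t$ with $T_1+T_2+T_3<t\le T$.
   Context: WSU-UX. Fix integers $K\ge 2$ and $T\ge 1$ and hyperparameters $\eta,\gamma$. The pair $(\eta,\gamma)$ is called valid if $\eta,\gamma\in(0,1/2)$ and $\eta K/\gamma\le 1/2$. Given a fixed loss sequence $\ell_t\in[0,1]^K$, WSU-UX sets $\pi_{1,i}=1/K$ and in each round $t$: forms $\tilde\pi_{t,i}=(1-\gamma)\pi_{t,i}+\gamma/K$; draws $I_t$ with $\Pr(I_t=i\mid\mathcal F_{t-1})=\tilde\pi_{t,i}$; sets $\hat\ell_{t,i}=\ell_{t,i}\mathbf 1[I_t=i]/\tilde\pi_{t,i}$; and updates $\pi_{t+1,i}=\pi_{t,i}\bigl(1-\eta(\hat\ell_{t,i}-\sum_{j}\pi_{t,j}\hat\ell_{t,j})\bigr)$; $\mathcal F_t$ is the history generated by $I_1,\dots,I_t$. Non-trivial regime: $\eta\ge T^{-2/3}$ and $\gamma\le T^{-1/3}$. Two-phase loss sequence ($K=2$, $T$ a multiple of $100$): with $T_1=\frac{T}{100}$, $\ell_{t,1}=1,\ell_{t,2}=0$ for $1\le t\le T_1$ and $\ell_{t,1}=0,\ell_{t,2}=1$ for $T_1<t\le T$. Further $T_2=\frac{2}{10}T$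 and $T_3=\frac{1}{10}T$. *)

(* Defs.v *)
From mathcomp Require Import all_boot all_order all_algebra.
From mathcomp Require Import reals exp.
Set Implicit Arguments. Unset Strict Implicit. Unset Printing Implicit Defensive.
Import Order.TTheory GRing.Theory Num.Theory.
Local Open Scope ring_scope.

Section WSU.
Variables (R : realType) (K : nat).

(* Arms are indexed by 'I_K (arm i of the paper is index i-1). *)

Definition tpi (gam : R) (p : 'I_K -> R) (j : 'I_K) : R :=
  (1 - gam) * p j + gam / K%:R.

Definition lhat (gam : R) (ell : 'I_K -> R) (p : 'I_K -> R) (i j : 'I_K) : R :=
  if i == j then ell j / tpi gam p j else 0.

Definition wsu_step (eta gam : R) (ell : 'I_K -> R) (p : 'I_K -> R) (i : 'I_K)
  : 'I_K -> R :=
  fun j => p j * (1 - eta * (lhat gam ell p i j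
                              - \sum_(k < K) p k * lhat gam ell p i k)).

Definition unif : 'I_K -> R := fun _ => 1 / K%:R.

Fixpoint wsu_run (eta gam : R) (loss : nat -> 'I_K -> R) (t : nat)
    (p : 'I_K -> R) (h : seq 'I_K) : 'I_K -> R :=
  match h with
  | [::] => p
  | i :: h' => wsu_run eta gam loss t.+1 (wsu_step eta gam (loss t) p i) h'
  end.

Fixpoint wsu_prob (eta gam : R) (loss : nat -> 'I_K -> R) (t : nat)
    (p : 'I_K -> R) (h : seq 'I_K) : R :=
  match h with
  | [::] => 1
  | i :: h' => tpi gam p i *
               wsu_prob eta gam loss t.+1 (wsu_step eta gam (loss t) p i) h'
  end.

(* E[pi_{t,j}] for t >= 1: pi_t is determined by I_1..I_{t-1};
   sum over all histories of length t-1 weighted by their probability. *)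
Definition expected_pi (eta gam : R) (loss : nat -> 'I_K -> R) (t : nat)
    (j : 'I_K) : R :=
  \sum_(h : (t.-1).-tuple 'I_K)
     wsu_prob eta gam loss 1 unif h * wsu_run eta gam loss 1 unif h j.

Definition valid_params (eta gam : R) : Prop :=
  0 < eta < 1/2 /\ 0 < gam < 1/2 /\ eta * K%:R / gam <= 1/2.

End WSU.

Definition nontrivial_regime (R : realType) (T : nat) (eta gam : R) : Prop :=
  powR (T%:R) (- (2 / 3)) <= eta /\ gam <= powR (T%:R) (- (1 / 3)).

(* two-phase loss sequence for K = 2, T_1 = T/100:
   rounds 1..T_1: l = (1,0); rounds T_1 < t <= T: l = (0,1).
   Index ord0 is arm 1, index 1 is arm 2. *)
Definition two_phase_loss (R : realType) (T : nat) (t : nat) (i : 'I_2) : R :=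
  if (t <= T %/ 100)%N then (if i == ord0 then 1 else 0)
  else (if i == ord0 then 0 else 1).

Definition arm2 : 'I_2 := @Ordinal 2 1 isT.

(* Main.v *)
Require Import Defs.
From mathcomp Require Import all_boot all_order all_algebra.
From mathcomp Require Import reals exp.
From mathcomp Require Import ring lra.
Import Order.TTheory GRing.Theory Num.Theory.
Local Open Scope ring_scope.
Set Implicit Arguments. Unset Strict Implicit.
Section S.
Variable R : realType.
Lemma I2E (i : 'I_2) : i = ord0 \/ i = arm2.
Proof. case: i => [[|[|//]] Hi]; [left|right]; exact: val_inj. Qed.

Lemma stepE (e g : R) ell p (i j : 'I_2) : wsu_step e g ell p i j =
  p j * (1 - e * (lhat g ell p i j - (p ord0 * lhat g ell p i ord0 + p arm2 * lhat g ell p i arm2))).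
Proof.
rewrite /wsu_step big_ord_recr big_ord_recr big_ord0 /= add0r.
have -> : widen_ord (leqnSn 1) ord_max = ord0 :> 'I_2 by apply: val_inj.
have -> : (ord_max : 'I_2) = arm2 by apply: val_inj.
by [].
Qed.

Definition odds (p : 'I_2 -> R) := p arm2 / p ord0.
Definition Inv (p : 'I_2 -> R) := 0 < p ord0 /\ 0 < p arm2 /\ p ord0 + p arm2 = 1.

Lemma sum2 (F : 'I_2 -> R) : \sum_(i < 2) F i = F ord0 + F arm2.
Proof.
rewrite big_ord_recr big_ord_recr big_ord0 /= add0r.
have -> : widen_ord (leqnSn 1) ord_max = ord0 :> 'I_2 by apply: val_inj.
by have -> : (ord_max : 'I_2) = arm2 by apply: val_inj.
Qed.

Lemma onestep (e g : R) (ell : 'I_2 -> R) p c :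
  0 < e -> 0 < g -> g < 1/2 -> 4 * e <= g -> Inv p ->
  ((ell ord0 = 1 /\ ell arm2 = 0 /\ c = 1 + 2 * e) \/
   (ell ord0 = 0 /\ ell arm2 = 1 /\ c = 1 - 2 * e / 3)) ->
  \sum_(i < 2) tpi g p i * odds (wsu_step e g ell p i) <= c * odds p.
Proof.
move=> he hg hg2 heg [h0 [h2 h02]] hell.
rewrite sum2 /odds !stepE /lhat /tpi /=.
move: h0 h2 h02; set p0 := p ord0; set p2 := p arm2 => h0 h2 h02.
have hp0 : p0 <= 1 by lra.
have hp2 : p2 <= 1 by lra.
set u0 := (1 - g) * p0 + g / 2.
set u2 := (1 - g) * p2 + g / 2.
have hg1 : 0 <= 1 - g by lra.
have hu0 : 2 * e <= u0.
  have := mulr_ge0 hg1 (ltW h0); rewrite /u0; lra.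
have hu2 : 2 * e <= u2.
  have := mulr_ge0 hg1 (ltW h2); rewrite /u2; lra.
have hu : u0 + u2 = 1.
  have -> : u0 + u2 = (1 - g) * (p0 + p2) + g by rewrite /u0 /u2; field.
  by rewrite h02; lra.
have u0p : 0 < u0 by lra.
have u2p : 0 < u2 by lra.
set z := p2 / p0.
have hz : 0 < z by rewrite /z divr_gt0.
case: hell => [[-> [-> ->]]|[-> [-> ->]]];
  rewrite !(mul0r, mulr0, addr0, add0r, subr0, sub0r, mulr1, mul1r, oppr0) -/z.
- set x := u0^-1.
  have ux : u0 * x = 1 by rewrite /x divff // gt_eqF.
  have xp : 0 < x by rewrite /x invr_gt0.
  have ex : e * x <= 1/2 by nra.
  rewrite -mulf_div -/z.
  have hB : 0 < 1 - e * (x - p0 * x) by nra.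
  have hw : u0 * ((1 - e * - (p0 * x)) / (1 - e * (x - p0 * x))) <= u0 + 2 * e.
    rewrite mulrA ler_pdivrMr //.
    have f1 : e * (u0 * x) = e by rewrite ux mulr1.
    have f2 : e * e * x * (p0 + p2) = e * e * x by rewrite h02 mulr1.
    have f3 : e * x * p2 <= 1/2 by nra.
    have f4 : e * (e * x * p2) <= e / 2 by nra.
    nra.
  rewrite mulrCA; have := ler_wpM2l (ltW hz) hw; nra.
- set x := u2^-1.
  have ux : u2 * x = 1 by rewrite /x divff // gt_eqF.
  have xp : 0 < x by rewrite /x invr_gt0.
  have ex : e * x <= 1/2 by nra.
  rewrite -mulf_div -/z.
  have hB : 0 < 1 - e * - (p2 * x) by nra.
  have hw : u2 * ((1 - e * (x - p2 * x)) / (1 - e * - (p2 * x))) <= u2 - 2 * e / 3.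
    rewrite mulrA ler_pdivrMr //.
    have f1 : e * (u2 * x) = e by rewrite ux mulr1.
    have f2 : e * e * x * (p0 + p2) = e * e * x by rewrite h02 mulr1.
    have f3 : e * x * p2 <= 1/2 by nra.
    have f4 : e * (e * x * p2) <= e / 2 by nra.
    nra.
  rewrite [u2 * (z * _)]mulrCA; have := ler_wpM2l (ltW hz) hw; nra.
Qed.

Lemma inv_step (e g : R) (ell : 'I_2 -> R) p i :
  0 < e -> 0 < g -> g < 1/2 -> 4 * e <= g -> Inv p ->
  ((ell ord0 = 1 /\ ell arm2 = 0) \/ (ell ord0 = 0 /\ ell arm2 = 1)) ->
  Inv (wsu_step e g ell p i).
Proof.
move=> he hg hg2 heg [h0 [h2 h02]] hell.
rewrite /Inv !stepE /lhat /tpi /=.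
move: h0 h2 h02; set p0 := p ord0; set p2 := p arm2 => h0 h2 h02.
have hp0 : p0 <= 1 by lra.
have hp2 : p2 <= 1 by lra.
set u0 := (1 - g) * p0 + g / 2.
set u2 := (1 - g) * p2 + g / 2.
have hg1 : 0 <= 1 - g by lra.
have hu0 : 2 * e <= u0.
  have := mulr_ge0 hg1 (ltW h0); rewrite /u0; lra.
have hu2 : 2 * e <= u2.
  have := mulr_ge0 hg1 (ltW h2); rewrite /u2; lra.
have u0p : 0 < u0 by lra.
have u2p : 0 < u2 by lra.
have ux0 : u0 * u0^-1 = 1 by rewrite divff // gt_eqF.
have xp0 : 0 < u0^-1 by rewrite invr_gt0.
have ex0 : e * u0^-1 <= 1/2 by nra.
have ux2 : u2 * u2^-1 = 1 by rewrite divff // gt_eqF.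
have xp2 : 0 < u2^-1 by rewrite invr_gt0.
have ex2 : e * u2^-1 <= 1/2 by nra.
have f0 : e * u0^-1 * p2 <= 1/2 by nra.
have f2 : e * u2^-1 * p0 <= 1/2 by nra.
have f0' : e * u0^-1 * p0 <= 1/2 by nra.
have f2' : e * u2^-1 * p2 <= 1/2 by nra.
case: (I2E i) => ->; case: hell => [[-> ->]|[-> ->]] /=;
  rewrite !(mul0r, mulr0, addr0, add0r, subr0, sub0r, mulr1, mul1r, oppr0);
  (split; [|split]); try nra; apply: mulr_gt0 => //; nra.
Qed.
End S.

Lemma sum_tuple_cons (R : realType) (n : nat) (G : seq 'I_2 -> R) :
  \sum_(h : n.+1.-tuple 'I_2) G h = \sum_(i : 'I_2) \sum_(h : n.-tuple 'I_2) G (i :: h).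
Proof.
rewrite pair_big /=.
rewrite (reindex (fun p : 'I_2 * n.-tuple 'I_2 => [tuple of p.1 :: p.2])) /=.
  by apply: eq_bigr => -[i h] _.
exists (fun h : n.+1.-tuple 'I_2 => (thead h, [tuple of behead h])).
  by move=> [i h] _; congr pair; apply: val_inj.
move=> h _; apply: val_inj => /=.
by case: h => -[|x s] //= _.
Qed.

Lemma sum_tuple0 (R : realType) (G : seq 'I_2 -> R) :
  \sum_(h : 0.-tuple 'I_2) G h = G [::].
Proof.
rewrite (big_pred1 [tuple]) // => h; rewrite /= (tuple0 h); exact/eqP.
Qed.


Section Main.
Variables (R : realType) (e g : R) (T : nat).
Hypotheses (he : 0 < e) (hg : 0 < g) (hg2 : g < 1/2) (heg : 4 * e <= g).
Let loss := two_phase_loss R T.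
Definition cc (k : nat) : R := if (k <= T %/ 100)%N then 1 + 2 * e else 1 - 2 * e / 3.
Definition EE n t p := \sum_(h : n.-tuple 'I_2)
  wsu_prob e g loss t p h * wsu_run e g loss t p h arm2.

Lemma loss_case k : (loss k ord0 = 1 /\ loss k arm2 = 0 /\ cc k = 1 + 2 * e) \/
   (loss k ord0 = 0 /\ loss k arm2 = 1 /\ cc k = 1 - 2 * e / 3).
Proof. by rewrite /loss /two_phase_loss /cc; case: ifP => _; [left|right]. Qed.

Lemma cc_ge0 k : 0 <= cc k.
Proof. have := heg; have := hg2; have := he; rewrite /cc; case: ifP => _; lra. Qed.

Lemma EE_bound n : forall t p, Inv p -> EE n t p <= odds p * \prod_(i < n) cc (t + i)%N.
Proof.
elim: n => [|n IH] t p hp.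
  rewrite /EE (sum_tuple0 (fun h => wsu_prob e g loss t p h * wsu_run e g loss t p h arm2)) big_ord0 /= mul1r mulr1 /odds.
  case: hp => h0 [h2 h02]; rewrite ler_pdivlMr //; nra.
rewrite /EE (sum_tuple_cons n (fun h => wsu_prob e g loss t p h * wsu_run e g loss t p h arm2)) /=.
have -> : \sum_(i < 2) \sum_(h : n.-tuple 'I_2)
    tpi g p i * wsu_prob e g loss t.+1 (wsu_step e g (loss t) p i) h *
    wsu_run e g loss t.+1 (wsu_step e g (loss t) p i) h arm2 =
  \sum_(i < 2) tpi g p i * EE n t.+1 (wsu_step e g (loss t) p i).
  apply: eq_bigr => i _; rewrite /EE mulr_sumr; apply: eq_bigr => h _; by rewrite mulrA.
rewrite [\prod_(i < n.+1) _]big_ord_recl /= addn0.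
have -> : \prod_(i < n) cc (t + bump 0 i)%N = \prod_(i < n) cc (t.+1 + i)%N.
  by apply: eq_bigr => i _; rewrite /bump /= add1n addnS.
set P := \prod_(i < n) cc (t.+1 + i)%N.
have hP : 0 <= P by apply: prodr_ge0 => i _; exact: cc_ge0.
have hcase := loss_case t.
have hstep := onestep (p := p) he hg hg2 heg hp hcase.
have hl : (loss t ord0 = 1 /\ loss t arm2 = 0) \/ (loss t ord0 = 0 /\ loss t arm2 = 1).
  by case: hcase => [[-> [-> _]]|[-> [-> _]]]; [left|right].
apply: (@le_trans _ _ (\sum_(i < 2) tpi g p i * (odds (wsu_step e g (loss t) p i) * P))).
  apply: ler_sum => i _; apply: ler_wpM2l.
    case: hp => h0 [h2 h02]; rewrite /tpi.
    have hg1 : 0 <= 1 - g by have := hg2; lra.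
    by case: (I2E i) => ->; (apply: addr_ge0; [apply: mulr_ge0 => //; lra | apply: divr_ge0; [exact: ltW | by []]]).
  by apply: IH; apply: inv_step.
under eq_bigr do rewrite mulrA.
rewrite -mulr_suml.
have := ler_wpM2r hP hstep.
by move=> H; apply: (le_trans H); rewrite [cc t * _]mulrC -mulrA.
Qed.
End Main.

From mathcomp Require Import zify.

Lemma bern (R : realType) (a : R) n : 0 <= a -> 1 + n%:R * a <= (1 + a) ^+ n.
Proof.
move=> ha; elim: n => [|n IH]; first by rewrite expr0 mul0r addr0.
rewrite exprS -natr1.
have h1 : 0 <= (1 + a) ^+ n by apply: exprn_ge0; lra.
have h2 : 0 <= n%:R * a :> R by apply: mulr_ge0 => //; exact: ler0n.
nra.
Qed.

Lemma pow_small (R : realType) (a : R) N : 0 <= a -> a <= 1 -> 3 <= N%:R * a ->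
  (1 - a) ^+ N <= 1/4.
Proof.
move=> ha ha1 hN.
have hb := bern N ha.
have h1 : (1 - a) ^+ N * (1 + a) ^+ N <= 1.
  rewrite -exprMn; apply: exprn_ile1; nra.
have h0 : 0 <= (1 - a) ^+ N by apply: exprn_ge0; lra.
nra.
Qed.

Lemma prod_cc (R : realType) (e : R) T m :
  \prod_(i < T %/ 100 + m) cc e T (1 + i)%N = (1 + 2 * e) ^+ (T %/ 100) * (1 - 2 * e / 3) ^+ m.
Proof.
rewrite big_split_ord /=.
have -> : \prod_(i < T %/ 100) cc e T (1 + lshift m i)%N = \prod_(i < T %/ 100) (1 + 2 * e).
  apply: eq_bigr => i _; rewrite /cc /=; have := ltn_ord i; case: ifP => //; lia.
have -> : \prod_(i < m) cc e T (1 + rshift (T %/ 100) i)%N = \prod_(i < m) (1 - 2 * e / 3).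
  apply: eq_bigr => i _; rewrite /cc /=; case: ifP => //; lia.
by rewrite !prodr_const !card_ord.
Qed.

Unset Implicit Arguments.
Lemma hyx_id (R : realType) (e : R) : 1 - (1 + 2 * e) * (1 - 2 * e / 3) ^+ 3 = (4 / 9) * (e * e) * (6 - 16 * e / 3 + 4 * (e * e) / 3).
Proof. by field. Qed.

(* T_1 = T/100, T_2 = 2T/10 = T/5, T_3 = T/10 (exact since 100 | T). *)
Theorem mainTheorem20 (R : realType) (eta gam : nat -> R) :
  (forall T : nat, (0 < T)%N -> (100 %| T)%N ->
     valid_params 2 (eta T) (gam T) /\ nontrivial_regime T (eta T) (gam T)) ->
  exists T0 : nat, forall T : nat, (T0 <= T)%N -> (0 < T)%N -> (100 %| T)%N ->
    forall t : nat, (T %/ 100 + T %/ 5 + T %/ 10 < t)%N -> (t <= T)%N ->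
      expected_pi (eta T) (gam T) (two_phase_loss R T) t arm2 <= 1 / 4.
Proof.
move=> H; exists 8000%N => T hT0 hT hdiv t ht htT.
have [hv' [hreg1 hreg2]] := H T hT hdiv.
case: hv' => /andP[he he2] [/andP[hg hg2] hv].
set e := eta T in he he2 hv hreg1 *; set g := gam T in hg hg2 hv hreg2 *.
have heg : 4 * e <= g.
  move: hv; rewrite ler_pdivrMr //; lra.
have -> : expected_pi e g (two_phase_loss R T) t arm2 = EE e g T t.-1 1 ((@unif R 2)) by [].
have hinv : Inv ((@unif R 2)) by rewrite /Inv /unif; lra.
apply: le_trans (EE_bound T he hg hg2 heg t.-1 1 hinv) _.
have -> : odds ((@unif R 2)) = 1 by rewrite /odds /unif divff //; lra.
rewrite mul1r.
set T1 := (T %/ 100)%N.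
have hT1 : T = (T1 * 100)%N by rewrite /T1 divnK.
have hm : (t.-1 = T1 + (t.-1 - T1))%N by lia.
rewrite hm prod_cc.
set m := (t.-1 - T1)%N.
have hm30 : (30 * T1 <= m)%N by rewrite /m; lia.
have hTpos : (0 : R) < T%:R by rewrite ltr0n.
have hT8 : (8000 : R) <= T%:R by rewrite ler_nat.
set a := T%:R `^ (- (2 / 3)) in hreg1.
have ha0 : 0 <= a by apply: powR_ge0.
have ha3 : a ^+ 3 * T%:R ^+ 2 = 1.
  have -> : a ^+ 3 = T%:R `^ (- (2 / 3) * 3%:R) by rewrite powRrM powR_mulrn.
  have -> : - (2 / 3) * 3%:R = - (2%:R) :> R by field.
  rewrite powRN powR_mulrn ?ler0n // mulVf // expf_neq0 // gt_eqF //.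
have hs : (a * T%:R) ^+ 3 = T%:R.
  by rewrite exprMn [T%:R ^+ 3]exprS mulrCA ha3 mulr1.
have hs20 : 20 <= a * T%:R.
  move: hs; set s := a * T%:R => hs.
  have hsp : 0 <= s by apply: mulr_ge0 => //; exact: ltW.
  rewrite -hs in hT8; rewrite !exprS expr0 mulr1 in hT8; case: (lerP 20 s) => // hlt.
  have q1 := ler_wpM2l hsp (ltW hlt).
  have hss : 0 <= s * s by apply: mulr_ge0.
  have q2 := ler_wpM2r hss (ltW hlt).
  exfalso; lra.
have heT : 20 <= e * T%:R by have := ler_wpM2r (ltW hTpos) hreg1; lra.
have heT1 : 1/5 <= e * T1%:R.
  move: heT; rewrite hT1 natrM; lra.
clear hT8 hs ha3 hreg2 hs20 hT0.
pose x := 1 - 2 * e / 3; rewrite -/x.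
have hx0 : 0 <= x by rewrite /x; lra.
have hx1 : x <= 1 by rewrite /x; lra.
have hyx : (1 + 2 * e) * x ^+ 3 <= 1.
  have hid := hyx_id R e; rewrite -/x in hid.
  have h1 : 0 <= e * e by apply: mulr_ge0; lra.
  have h2 : 0 <= (4 / 9) * (e * e) * (6 - 16 * e / 3 + 4 * (e * e) / 3).
    apply: mulr_ge0; [apply: mulr_ge0 => //; lra | lra].
  lra.
have hy0 : 0 <= 1 + 2 * e by lra.
apply: (@le_trans _ _ ((1 + 2 * e) ^+ T1 * x ^+ (30 * T1))).
  apply: ler_wpM2l; first exact: exprn_ge0.
  exact: ler_wiXn2l.
rewrite exprM -exprMn.
apply: (@le_trans _ _ ((x ^+ 27) ^+ T1)).
  apply: lerXn2r.
  - by rewrite nnegrE; apply: mulr_ge0; [|apply: exprn_ge0].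
  - by rewrite nnegrE; apply: exprn_ge0.
  have -> : x ^+ 30 = x ^+ 3 * x ^+ 27 by rewrite -exprD.
  rewrite mulrA; have h27 : 0 <= x ^+ 27 by apply: exprn_ge0.
  have := ler_wpM2r h27 hyx; lra.
rewrite -exprM /x.
apply: pow_small; first by lra.
  by lra.
rewrite natrM; lra.
Qed.
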